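(* Let $\Gamma$ be a gain operator on $\ell^\infty_+(\mathcal I)$ and assume: (i) $\Gamma$ satisfies the $\oplus$-MBI property; (ii) there is $\rho\in\mathcal K_\infty$ such that $\Sigma(\Gamma_\rho)$ is UGAS; (iii) the family $\{\gamma_{ij}^{-1}: ji\in E(\mathcal G)\}$ is pointwise equicontinuous; (iv) there is $\zeta\in\mathcal K_\infty$ such that for all $ji\in E(\mathcal G)$ and all $0\le s^1\le s^2$, $\mu_i(s^2_{|\mathcal I_i})-\mu_i(s^1_{|\mathcal I_i})\ge\zeta(s^2_j-s^1_j)$; (v) the path $\sigma_*(r):=\bigoplus_{n=0}^\infty\hat\Gamma^n(r\mathbf 1)$, $r\ge0$, is norm-continuous. Then for each $r\ge0$ the operator $s\mapsto r\mathbf 1\oplus\Gamma(s)$ has precisely one fixed point.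
   Context: Let $\mathcal I$ be a nonempty countable index set; $\ell^\infty_+(\mathcal I)$ is the cone of nonnegative real families $s=(s_i)_{i\in\mathcal I}$ with $\|s\|:=\sup_i|s_i|<\infty$, ordered componentwise; $\mathbf 1$ is the all-ones vector; $\oplus$ is the componentwise maximum, $\bigoplus$ the componentwise supremum. $\mathcal K$: continuous strictly increasing $\gamma:\mathbb R_+\to\mathbb R_+$ with $\gamma(0)=0$; $\mathcal K_\infty$: unbounded elements of $\mathcal K$, acting componentwise; $\mathcal{KL}$: continuous $\beta$ with $\beta(\cdot,t)\in\mathcal K$ and $\beta(r,\cdot)$ continuous strictly decreasing to $0$ for $r>0$. For $\mathcal J\subset\mathcal I$, $s_{|\mathcal J}$ agrees with $s$ on $\mathcal J$ and is $0$ elsewhere. Gain operator: for each $i$ a finite (possibly empty) $\mathcal I_i\subset\mathcal I\setminus\{i\}$; directed graph $\mathcal G$ with vertices $\mathcal I$ and edges $ji$, $j\in\mathcal I_i$; a pointwise equicontinuous family $\gamma_{ij}\in\mathcal K_\infty$ ($ji\in E(\mathcal G)$) (pointwise equicontinuity: for all $r_0\ge0$, $\varepsilon>0$ there is $\delta>0$ with $|f(r)-f(r_0)|\le\varepsilon$ whenever $|r-r_0|\le\delta$, for all members $f$); functions $\mu_i:\ell^\infty_+(\mathcal I)\to[0,\infty]$ with (M1) some $\xi\in\mathcal K_\infty$ has $\mu_i(0)=0$, $\mu_i(s)\ge\xi(\|s\|)$; (M2) $\mu_i$ monotone; (M3) for each finite $\mathcal J$, $\mu_i$ restricted to vectors vanishing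 off $\mathcal J$ is finite-valued and continuous; (M4) for each norm-bounded $A$ and $\varepsilon>0$ there is $\delta>0$ with $\sup_i|\mu_i(s_{|\mathcal I_i})-\mu_i(s^0_{|\mathcal I_i})|\le\varepsilon$ whenever $s^0\in A$, $\|s-s^0\|\le\delta$. $\Gamma_i(s):=\mu_i([\gamma_{ij}(s_j)]_{j\in\mathcal I_i})$ (argument zero outside $\mathcal I_i$). $\Gamma_\rho:=(\mathrm{id}+\rho)\circ\Gamma$, $\hat\Gamma(s):=s\oplus\Gamma(s)$. $\Sigma(T)$ is the system $s^{n+1}=T(s^n)$; UGAS: $\|T^n(s)\|\le\beta(\|s\|,n)$ for some $\beta\in\mathcal{KL}$. $\oplus$-MBI property: there is $\varphi\in\mathcal K_\infty$ such that for all $s,b$, $s\le b\oplus\Gamma(s)$ implies $\|s\|\le\varphi(\|b\|)$. *)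

(* Defs.v *)
From HB Require Import structures.
From mathcomp Require Import all_boot all_order all_algebra.
From mathcomp Require Import boolp classical_sets cardinality reals constructive_ereal.
Set Implicit Arguments. Unset Strict Implicit. Unset Printing Implicit Defensive.
Import Order.TTheory GRing.Theory Num.Theory.
Local Open Scope ring_scope.
Local Open Scope classical_set_scope.

Section ComparisonFunctions.
Variable R : realType.

Definition cont_nonneg (f : R -> R) : Prop :=
  forall r0, 0 <= r0 -> forall e, 0 < e -> exists d, 0 < d /\
    forall r, 0 <= r -> `|r - r0| <= d -> `|f r - f r0| <= e.

Definition is_K (f : R -> R) : Prop :=
  f 0 = 0 /\ cont_nonneg f /\ (forall a b, 0 <= a -> a < b -> f a < f b).

Definition is_Kinf (f : R -> R) : Prop :=
  is_K f /\ (forall M, exists r, 0 <= r /\ M <= f r).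

Definition is_KL (b : R -> R -> R) : Prop :=
  (forall r0 t0, 0 <= r0 -> 0 <= t0 -> forall e, 0 < e -> exists d, 0 < d /\
     forall r t, 0 <= r -> 0 <= t -> `|r - r0| <= d -> `|t - t0| <= d ->
       `|b r t - b r0 t0| <= e) /\
  (forall t, 0 <= t -> is_K (fun r => b r t)) /\
  (forall r, 0 < r ->
     (forall t1 t2, 0 <= t1 -> t1 < t2 -> b r t2 < b r t1) /\
     (forall e, 0 < e -> exists T, 0 <= T /\ forall t, T <= t -> b r t <= e)).

Definition pw_equicont (A : Type) (P : A -> Prop) (F : A -> R -> R) : Prop :=
  forall r0, 0 <= r0 -> forall e, 0 < e -> exists d, 0 < d /\
    forall a, P a -> forall r, 0 <= r -> `|r - r0| <= d -> `|F a r - F a r0| <= e.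

End ComparisonFunctions.

Section Sequences.
Variables (R : realType) (I : Type).

Definition linf_pos (s : I -> R) : Prop :=
  (forall i, 0 <= s i) /\ exists M, forall i, s i <= M.

Definition supnorm (s : I -> R) : R := sup (range (fun i => `|s i|)).

Definition restr (J : set I) (s : I -> R) : I -> R :=
  fun i => if `[< J i >] then s i else 0.

Definition vmax (s t : I -> R) : I -> R := fun i => Num.max (s i) (t i).

Definition cstv (r : R) : I -> R := fun _ => r.

(* Gain operator Gamma_i(s) = mu_i([gamma_ij(s_j)]_{j in I_i}); the entries are
   indexed by edges ji, i.e. gam i j = gamma_ij for j in I_i. *)
Definition gainop (Ii : I -> set I) (gam : I -> I -> R -> R)
  (mu : I -> (I -> R) -> \bar R) (s : I -> R) : I -> R :=
  fun i => fine (mu i (restr (Ii i) (fun j => gam i j (s j)))).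

Definition is_gain_operator (Ii : I -> set I) (gam : I -> I -> R -> R)
  (mu : I -> (I -> R) -> \bar R) : Prop :=
  (forall i, finite_set (Ii i) /\ ~ Ii i i) /\
  (forall i j, Ii i j -> is_Kinf (gam i j)) /\
  pw_equicont (fun ij : I * I => Ii ij.1 ij.2) (fun ij => gam ij.1 ij.2) /\
  (exists xi, is_Kinf xi /\ forall i, mu i (cstv 0) = 0%E /\
     forall s, linf_pos s -> ((xi (supnorm s))%:E <= mu i s)%E) /\
  (forall i s1 s2, linf_pos s1 -> linf_pos s2 -> (forall k, s1 k <= s2 k) ->
     (mu i s1 <= mu i s2)%E) /\
  (forall i (J : set I), finite_set J ->
     (forall s, linf_pos s -> (forall k, ~ J k -> s k = 0) -> mu i s \is a fin_num) /\
     (forall s0, linf_pos s0 -> (forall k, ~ J k -> s0 k = 0) ->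
        forall e, 0 < e -> exists d, 0 < d /\
          forall s, linf_pos s -> (forall k, ~ J k -> s k = 0) ->
            supnorm (fun k => s k - s0 k) <= d ->
            `|fine (mu i s) - fine (mu i s0)| <= e)) /\
  (forall A : set (I -> R), A `<=` linf_pos ->
     (exists B, forall s, A s -> supnorm s <= B) ->
     forall e, 0 < e -> exists d, 0 < d /\
       forall s0 s, A s0 -> linf_pos s -> supnorm (fun k => s k - s0 k) <= d ->
         forall i, `|fine (mu i (restr (Ii i) s)) - fine (mu i (restr (Ii i) s0))| <= e).

Definition UGAS (T : (I -> R) -> (I -> R)) : Prop :=
  exists beta, is_KL beta /\
    forall s, linf_pos s -> forall n : nat,
      supnorm (iter n T s) <= beta (supnorm s) n%:R.

Definition oplus_MBI (G : (I -> R) -> (I -> R)) : Prop :=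
  exists phi, is_Kinf phi /\
    forall s b, linf_pos s -> linf_pos b -> (forall i, s i <= Num.max (b i) (G s i)) ->
      supnorm s <= phi (supnorm b).

Definition Grho (rho : R -> R) (G : (I -> R) -> (I -> R)) (s : I -> R) : I -> R :=
  fun i => G s i + rho (G s i).

Definition Ghat (G : (I -> R) -> (I -> R)) (s : I -> R) : I -> R := vmax s (G s).

Definition sigma_star (G : (I -> R) -> (I -> R)) (r : R) : I -> R :=
  fun i => sup (range (fun n : nat => iter n (Ghat G) (cstv r) i)).

End Sequences.

(* Main.v *)
Require Import Defs.
From HB Require Import structures.
From mathcomp Require Import all_boot all_order all_algebra.
From mathcomp Require Import boolp classical_sets cardinality reals constructive_ereal.
From mathcomp Require Import lra.
From mathcomp Require finmap.
Import Order.TTheory GRing.Theory Num.Theory.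
Local Open Scope ring_scope.
Local Open Scope classical_set_scope.
Set Implicit Arguments. Unset Strict Implicit. Unset Printing Implicit Defensive.
Section Basics.
Variable R : realType.

Lemma supnorm_ub (I : Type) (s : I -> R) M : (forall i, `|s i| <= M) ->
  forall i, `|s i| <= supnorm s.
Proof.
move=> HM i; rewrite /supnorm; apply: ub_le_sup; last by exists i.
by exists M => _ [j _ <-].
Qed.

Lemma supnorm_le (I : Type) (s : I -> R) M : 0 <= M -> (forall i, `|s i| <= M) ->
  supnorm s <= M.
Proof.
move=> M0 HM; rewrite /supnorm.
have [[i _]|] := pselect (exists i : I, True).
  by apply: ge_sup; [exists `|s i|, i | move=> _ [j _ <-]].
move=> hn; rewrite (_ : range (fun i => `|s i|) = set0) ?sup0 //.
by apply/seteqP; split => // x [j _ _]; case: hn; exists j.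
Qed.

Lemma supnorm_ge0 (I : Type) (s : I -> R) : 0 <= supnorm s.
Proof.
rewrite /supnorm.
have [[i _]|] := pselect (exists i : I, True).
  have [hs|hs] := pselect (has_sup (range (fun i => `|s i|))).
    apply: le_trans (normr_ge0 (s i)) _.
    by apply: sup_upper_bound => //; exists i.
  by rewrite sup_out.
move=> hn; rewrite (_ : range (fun i => `|s i|) = set0) ?sup0 //.
by apply/seteqP; split => // x [j _ _]; case: hn; exists j.
Qed.

Lemma linf_ub (I : Type) (s : I -> R) : linf_pos s -> forall i, s i <= supnorm s.
Proof.
move=> [h0 [M hM]] i.
have h := @supnorm_ub I s M (fun j => ltac:(by rewrite ger0_norm ?hM)) i.
by rewrite ger0_norm in h.
Qed.

Lemma linf_le (I : Type) (s t : I -> R) : (forall i, 0 <= s i) -> linf_pos t ->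
  (forall i, s i <= t i) -> linf_pos s.
Proof.
move=> h0 [_ [M hM]] hle; split => //; exists M => i; exact: le_trans (hle i) (hM i).
Qed.

Lemma linf_cst (I : Type) (c : R) : 0 <= c -> linf_pos (@cstv R I c).
Proof. by move=> c0; split => //; exists c. Qed.

Lemma supnorm_cst (I : Type) (c : R) : inhabited I -> 0 <= c -> supnorm (@cstv R I c) = c.
Proof.
move=> [i] c0; apply/le_anti/andP; split.
  by apply: supnorm_le => // j; rewrite /cstv ger0_norm.
have := @linf_ub I (cstv c) (linf_cst I c0) i; done.
Qed.

Lemma K_ge0 (f : R -> R) : is_K f -> forall a, 0 <= a -> 0 <= f a.
Proof.
move=> [f0 [_ finc]] a; rewrite le_eqVlt => /orP[/eqP <-|a0]; first by rewrite f0.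
by rewrite -f0; apply/ltW/finc.
Qed.

Lemma K_gt0 (f : R -> R) : is_K f -> forall a, 0 < a -> 0 < f a.
Proof. by move=> [f0 [_ finc]] a a0; rewrite -f0; apply/finc. Qed.

Lemma K_le (f : R -> R) : is_K f -> forall a b, 0 <= a -> a <= b -> f a <= f b.
Proof.
move=> [f0 [_ finc]] a b a0; rewrite le_eqVlt => /orP[/eqP ->//|ab].
exact/ltW/finc.
Qed.

Lemma K_lt_inv (f : R -> R) : is_K f -> forall a b, 0 <= a -> 0 <= b -> f a < f b -> a < b.
Proof.
move=> hf a b a0 b0 h; rewrite ltNge; apply/negP => ba.
by have := K_le hf b0 ba; rewrite leNgt h.
Qed.

End Basics.
Section UE.
Variable R : realType.

Lemma unif_equicont (A : Type) (P : A -> Prop) (F : A -> R -> R) :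
  pw_equicont P F -> forall X, 0 <= X -> forall e, 0 < e -> exists d, 0 < d /\
  forall a, P a -> forall x y, 0 <= x -> x <= X -> 0 <= y -> y <= X ->
    `|x - y| <= d -> `|F a x - F a y| <= e.
Proof.
move=> Heq X X0 e e0.
pose Good x := exists d : R, 0 < d /\ forall a, P a -> forall y z, 0 <= y -> y <= x ->
   0 <= z -> z <= x -> `|y - z| <= d -> `|F a y - F a z| <= e.
pose S := [set x | (0 <= x /\ x <= X) /\ Good x].
have S0 : S 0.
  split; first by split.
  exists 1; split => // a _ y z y0 yx z0 zx _.
  have -> : y = 0 by apply/le_anti; rewrite yx y0.
  have -> : z = 0 by apply/le_anti; rewrite zx z0.
  by rewrite subrr normr0 ltW.
have hsS : has_sup S by split; [exists 0 | exists X => x [[_ ?] _]].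
pose m := sup S.
have m0 : 0 <= m by apply: sup_upper_bound.
have mX : m <= X by apply: ge_sup; [exists 0 | move=> x [[_ ?] _]].
have e20 : 0 < e / 2 by rewrite divr_gt0.
have [dl [dl0 Hdl]] := Heq m m0 (e / 2) e20.
have dl20 : 0 < dl / 2 by rewrite divr_gt0.
have [x0 [[x00 x0X] [d0 [d00 Hd0]]] mx0] := sup_adherent dl20 hsS.
have {}mx0 : m - dl / 2 < x0 by [].
pose x1 := Num.min (m + dl / 2) X.
have Gx1 : Good x1.
  exists (Num.min d0 (dl / 2)); split; first by rewrite lt_min d00 dl20.
  move=> a Pa y z y0 yx1 z0 zx1 yz.
  have [yd0 yd2] : `|y - z| <= d0 /\ `|y - z| <= dl / 2.
    by move: yz; rewrite le_min => /andP[].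
  have yb : y <= m + dl / 2 by apply: le_trans yx1 _; rewrite ge_min lexx.
  have zb : z <= m + dl / 2 by apply: le_trans zx1 _; rewrite ge_min lexx.
  move: yd2; rewrite ler_norml => /andP[yz1 yz2].
  case: (boolP ((y <= x0) && (z <= x0))) => [/andP[hy hz]|hyz]; first exact: Hd0.
  have hyz' : x0 < y \/ x0 < z by move: hyz; rewrite negb_and -!ltNge => /orP.
  have ym : `|y - m| <= dl.
    by rewrite ler_norml; case: hyz' => h; apply/andP; split; lra.
  have zm : `|z - m| <= dl.
    by rewrite ler_norml; case: hyz' => h; apply/andP; split; lra.
  have := Hdl a Pa y y0 ym; have := Hdl a Pa z z0 zm.
  rewrite (distrC (F a z)) => h1 h2.
  have := ler_distD (F a m) (F a y) (F a z); rewrite (distrC (F a y)).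
  move=> h3; apply: le_trans h3 _; lra.
have x1S : S x1.
  split=> //; split; last by rewrite ge_min lexx orbT.
  by rewrite le_min X0 andbT; lra.
have x1m : x1 <= m by apply: sup_upper_bound.
have x1X : x1 = X.
  move: x1m; rewrite /x1 ge_min => /orP[h|h]; first lra.
  by apply/le_anti; rewrite ge_min lexx orbT /= le_min; apply/andP; split; lra.
move: Gx1; rewrite x1X => -[d [d0' Hd]]; exists d; split => // a Pa x y ? ? ? ?.

Qed.

End UE.
Section Finite.
Variable I : choiceType.

Lemma seq_common (P : I -> nat -> Prop) (l : seq I) :
  (forall j n m, P j n -> (n <= m)%N -> P j m) ->
  (forall j, j \in l -> exists n, P j n) -> exists N, forall j, j \in l -> P j N.
Proof.
move=> Pm; elim: l => [|a l IH] H; first by exists 0%N.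
have [N1 HN1] := IH (fun j jl => H j (mem_behead (s := a :: l) jl)).
have [N2 HN2] := H a (mem_head a l).
exists (maxn N1 N2) => j; rewrite in_cons => /orP[/eqP->|jl].
  by apply: Pm HN2 _; rewrite leq_maxr.
by apply: Pm (HN1 j jl) _; rewrite leq_maxl.
Qed.

Lemma finite_common (P : I -> nat -> Prop) (J : set I) : finite_set J ->
  (forall j n m, P j n -> (n <= m)%N -> P j m) ->
  (forall j, J j -> exists n, P j n) -> exists N, forall j, J j -> P j N.
Proof.
move=> /finite_fsetP[X ->] Pm H.
have [N HN] := @seq_common P (finmap.enum_fset X) Pm (fun j jX => H j jX).
by exists N => j jX; apply: HN.
Qed.
End Finite.
Section Gain.
Variables (R : realType) (I : choiceType) (Ii : I -> set I) (gam : I -> I -> R -> R).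
Variables (mu : I -> (I -> R) -> \bar R) (xi : R -> R).
Hypothesis Hfin : forall i, finite_set (Ii i).
Hypothesis HK : forall i j, Ii i j -> is_Kinf (gam i j).
Hypothesis Hgeq : pw_equicont (fun ij : I * I => Ii ij.1 ij.2) (fun ij => gam ij.1 ij.2).
Hypothesis Hxi : is_Kinf xi.
Hypothesis HM1 : forall i, mu i (cstv 0) = 0%E /\
     forall s, linf_pos s -> ((xi (supnorm s))%:E <= mu i s)%E.
Hypothesis HM2 : forall i s1 s2, linf_pos s1 -> linf_pos s2 -> (forall k, s1 k <= s2 k) ->
     (mu i s1 <= mu i s2)%E.
Hypothesis HM3 : forall i (J : set I), finite_set J ->
     (forall s, linf_pos s -> (forall k, ~ J k -> s k = 0) -> mu i s \is a fin_num) /\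
     (forall s0, linf_pos s0 -> (forall k, ~ J k -> s0 k = 0) ->
        forall e, 0 < e -> exists d, 0 < d /\
          forall s, linf_pos s -> (forall k, ~ J k -> s k = 0) ->
            supnorm (fun k => s k - s0 k) <= d ->
            `|fine (mu i s) - fine (mu i s0)| <= e).
Hypothesis HM4 : forall A : set (I -> R), A `<=` (@linf_pos R I) ->
     (exists B, forall s, A s -> supnorm s <= B) ->
     forall e, 0 < e -> exists d, 0 < d /\
       forall s0 s, A s0 -> linf_pos s -> supnorm (fun k => s k - s0 k) <= d ->
         forall i, `|fine (mu i (restr (Ii i) s)) - fine (mu i (restr (Ii i) s0))| <= e.

Definition gv i (s : I -> R) := restr (Ii i) (fun j => gam i j (s j)).
Local Notation G := (gainop Ii gam mu).

Lemma GE s i : G s i = fine (mu i (gv i s)). Proof. by []. Qed.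

Lemma restr_in (J : set I) (s : I -> R) j : J j -> restr J s j = s j.
Proof. by move=> Jj; rewrite /restr asboolT. Qed.

Lemma restr_out (J : set I) (s : I -> R) j : ~ J j -> restr J s j = 0.
Proof. by move=> Jj; rewrite /restr asboolF. Qed.

Lemma restr_cst0 (J : set I) : restr J (cstv 0) = cstv (0 : R).
Proof. by apply/funext => j; rewrite /restr /cstv; case: asboolP. Qed.

Lemma bound_nat (x : R) : exists K : nat, x < K%:R.
Proof.
have [x0|x0] := leP 0 x; first by exists (Num.bound x); exact: archi_boundP.
by exists 0%N; rewrite (lt_le_trans x0).
Qed.

Lemma gam_bound B : 0 <= B -> exists Y, 0 <= Y /\
  forall i j, Ii i j -> forall x, 0 <= x -> x <= B -> gam i j x <= Y.
Proof.
move=> B0.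
have [d [d0 Hd]] := unif_equicont Hgeq B0 ltr01.
have [K HK'] := bound_nat (B / d).
have claim : forall k : nat, forall i j, Ii i j -> forall x, 0 <= x -> x <= B ->
    x <= k%:R * d -> gam i j x <= k%:R.
  elim=> [|k IH] i j ij x x0 xB xk.
    have -> : x = 0 by apply/le_anti; rewrite x0 andbT; move: xk; rewrite mul0r.
    by case: (HK ij) => -[-> _] _.
  have [xk'|xk'] := leP x (k%:R * d).
    by apply: le_trans (IH i j ij x x0 xB xk') _; rewrite ler_nat.
  pose y := Num.max 0 (x - d).
  have y0 : 0 <= y by rewrite le_max lexx.
  have yB : y <= B by rewrite ge_max B0 /=; lra.
  have yk : y <= k%:R * d.
    rewrite ge_max; apply/andP; split; first by rewrite mulr_ge0 // ltW.
    by move: xk; rewrite -natr1 mulrDl mul1r; lra.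
  have := Hd (i, j) ij x y x0 xB y0 yB.
  have xy : `|x - y| <= d.
    rewrite /y; have [h|h] := leP 0 (x - d);
    by rewrite ler_norml; apply/andP; split; lra.
  move=> /(_ xy) /= h; have := IH i j ij y y0 yB yk.
  rewrite -natr1; move: h; rewrite ler_norml => /andP[_ h]; lra.
exists K%:R; split => // i j ij x x0 xB; apply: (claim K i j ij x x0 xB).
apply: le_trans xB _; move: HK'; rewrite ltr_pdivrMr // => /ltW; done.
Qed.

Lemma linf_bound (s : I -> R) : linf_pos s -> exists B, 0 <= B /\ forall j, s j <= B.
Proof.
move=> [s0 [M hM]]; exists (Num.max 0 M); split; first by rewrite le_max lexx.
by move=> j; rewrite le_max hM orbT.
Qed.

Lemma gv_bound s : linf_pos s -> exists Y, 0 <= Y /\ forall i j, 0 <= gv i s j <= Y.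
Proof.
move=> hs; have [B [B0 hB]] := linf_bound hs.
have [Y [Y0 hY]] := gam_bound B0; exists Y; split => // i j.
rewrite /gv /restr; case: asboolP => ij; last by rewrite lexx.
case: hs => s0 _.
by rewrite hY // andbT; apply: (K_ge0 (proj1 (HK ij))) (s0 j).
Qed.

Lemma gv_linf i s : linf_pos s -> linf_pos (gv i s).
Proof.
move=> /gv_bound[Y [_ hY]]; split; first by move=> j; case/andP: (hY i j).
by exists Y => j; case/andP: (hY i j).
Qed.

Lemma gv_fin i s : linf_pos s -> mu i (gv i s) \is a fin_num.
Proof.
move=> hs; apply: (HM3 i (Hfin i)).1; first exact: gv_linf.
by move=> k; apply: restr_out.
Qed.

Lemma restr_fin i (s : I -> R) : linf_pos s -> mu i (restr (Ii i) s) \is a fin_num.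
Proof.
move=> [s0 [M hM]]; apply: (HM3 i (Hfin i)).1; last by move=> k; apply: restr_out.
split; first by move=> k; rewrite /restr; case: asboolP.
exists (Num.max 0 M) => k; rewrite /restr; case: asboolP => _.
  by rewrite le_max hM orbT.
by rewrite le_max lexx.
Qed.

Lemma supnorm_linf_ge0 (s : I -> R) : supnorm s >= 0.
Proof. exact: supnorm_ge0. Qed.

Lemma mu_ge0 i s : linf_pos s -> (0 <= mu i s)%E.
Proof.
move=> hs; apply: le_trans ((HM1 i).2 s hs); rewrite lee_fin.
exact: (K_ge0 (proj1 Hxi)) (supnorm_ge0 s).
Qed.

Lemma G_ge0 s i : linf_pos s -> 0 <= G s i.
Proof. by move=> hs; rewrite GE; apply/fine_ge0/mu_ge0/gv_linf. Qed.

Lemma G_mono s t i : linf_pos s -> linf_pos t -> (forall j, Ii i j -> s j <= t j) ->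
  G s i <= G t i.
Proof.
move=> hs ht hst; rewrite !GE; apply: fine_le; try exact: gv_fin.
apply: HM2; try exact: gv_linf.
move=> k; rewrite /gv /restr; case: asboolP => // ik.
by apply: (K_le (proj1 (HK ik))) (hst k ik); case: hs.
Qed.

Lemma mu_restr_cst_bound Y : 0 <= Y -> exists C, forall i,
  fine (mu i (restr (Ii i) (cstv Y))) <= C.
Proof.
move=> Y0.
pose A := fun v : I -> R => exists c, 0 <= c /\ c <= Y /\ v = cstv c.
have AL : A `<=` (@linf_pos R I) by move=> v [c [c0 [_ ->]]]; apply: linf_cst.
have AB : exists B, forall s, A s -> supnorm s <= B.
  exists Y => s [c [c0 [cY ->]]]; apply: supnorm_le => // j.
  by rewrite /cstv ger0_norm.
have [d [d0 Hd]] := HM4 AL AB ltr01.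
have [K HK'] := bound_nat (Y / d).
pose c (k : nat) := Num.min (k%:R * d) Y.
have c0 k : 0 <= c k by rewrite le_min Y0 andbT mulr_ge0 // ltW.
have cY k : c k <= Y by rewrite ge_min lexx orbT.
have claim : forall k : nat, forall i, fine (mu i (restr (Ii i) (cstv (c k)))) <= k%:R.
  elim=> [|k IH] i.
    have -> : c 0%N = 0 by apply/le_anti; rewrite c0 ge_min mul0r lexx.
    by rewrite restr_cst0 (HM1 i).1.
  have hA : A (cstv (c k)) by exists (c k).
  have hs : supnorm (fun j : I => @cstv R I (c k.+1) j - @cstv R I (c k) j) <= d.
    apply: supnorm_le; first exact: ltW.
    move=> j; rewrite /cstv /c -natr1 mulrDl mul1r.
    have [h1|h1] := leP (k%:R * d) Y; have [h2|h2] := leP (k%:R * d + d) Y;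
    by rewrite ler_norml; apply/andP; split; lra.
  have := Hd (cstv (c k)) (cstv (c k.+1)) hA (linf_cst I (c0 k.+1)) hs i.
  rewrite -natr1 ler_norml => /andP[_ h2].
  have := IH i; lra.
exists K%:R => i.
have -> : Y = c K.
  apply/le_anti; rewrite cY andbT le_min lexx andbT.
  by move: HK'; rewrite ltr_pdivrMr // => /ltW.
exact: claim.
Qed.

Lemma G_bnd B : 0 <= B -> exists C, forall s, linf_pos s -> (forall j, s j <= B) ->
  forall i, G s i <= C.
Proof.
move=> B0; have [Y [Y0 hY]] := gam_bound B0.
have [C hC] := mu_restr_cst_bound Y0.
exists C => s hs sB i; apply: le_trans (hC i); rewrite GE.
apply: fine_le; [exact: gv_fin | apply: restr_fin; exact: linf_cst |].
have hr : linf_pos (restr (Ii i) (@cstv R I Y)).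
  split; first by move=> k; rewrite /restr /cstv; case: asboolP.
  by exists Y => k; rewrite /restr /cstv; case: asboolP.
apply: HM2; [exact: gv_linf | exact: hr |].
move=> k; rewrite /gv /restr /cstv; case: asboolP => // ik.
case: hs => s0 _; apply: hY => //.
Qed.

Lemma G_linf s : linf_pos s -> linf_pos (G s).
Proof.
move=> hs; have [B [B0 hB]] := linf_bound hs.
have [C hC] := G_bnd B0; split; first by move=> i; apply: G_ge0.
by exists C => i; apply: hC.
Qed.
Lemma G_cont (sq : nat -> I -> R) (u : I -> R) :
  (forall n, linf_pos (sq n)) -> linf_pos u ->
  (forall n m j, (n <= m)%N -> sq n j <= sq m j) ->
  (forall n j, sq n j <= u j) ->
  (forall j e, 0 < e -> exists n, u j - e <= sq n j) ->
  forall i e, 0 < e -> exists n, G u i <= G (sq n) i + e.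
Proof.
move=> hsq hu hmono hle hconv i e e0.
have vanish s k : ~ Ii i k -> gv i s k = 0 by move=> ik; apply: restr_out.
have [d [d0 Hd]] := (HM3 i (Hfin i)).2 (gv i u) (gv_linf i hu) (vanish u) e e0.
have [B [B0 hB]] := linf_bound hu.
have [eta [eta0 Heta]] := unif_equicont Hgeq B0 d0.
have [N HN] := @finite_common I (fun j n => u j - eta <= sq n j) (Ii i) (Hfin i)
  (fun j n m h nm => le_trans h (hmono n m j nm)) (fun j _ => hconv j eta eta0).
exists N.
have h := Hd (gv i (sq N)) (gv_linf i (hsq N)) (vanish _).
have hs : supnorm (fun k => gv i (sq N) k - gv i u k) <= d.
  apply: supnorm_le; first exact: ltW.
  move=> k; rewrite /gv /restr; case: asboolP => ik; last by rewrite subrr normr0 ltW.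
  have sq0 : 0 <= sq N k by case: (hsq N).
  have u0 : 0 <= u k by case: hu.
  apply: (Heta (i, k) ik) => //.
  - exact: le_trans (hle N k) (hB k).
  - by have := HN k ik; have := hle N k; rewrite ler_norml => h1 h2; apply/andP; split; lra.
have := h hs; rewrite !GE ler_norml => /andP[h1 _]; lra.
Qed.

Hypothesis Iinh : inhabited I.
Variable phi : R -> R.
Hypothesis Hphi : forall s b, linf_pos s -> linf_pos b ->
  (forall i, s i <= Num.max (b i) (G s i)) -> supnorm s <= phi (supnorm b).

Definition sq (t : R) (n : nat) : I -> R := iter n (Ghat G) (cstv t).

Lemma sqS t n : sq t n.+1 = vmax (sq t n) (G (sq t n)).
Proof. by []. Qed.

Lemma vmax_linf (s u : I -> R) : linf_pos s -> linf_pos u -> linf_pos (vmax s u).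
Proof.
move=> [s0 [M hM]] [u0 [M' hM']]; split.
  by move=> i; rewrite /vmax le_max s0.
by exists (Num.max M M') => i; rewrite /vmax ge_max !le_max hM hM' /= orbT.
Qed.

Lemma sq_linf t : 0 <= t -> forall n, linf_pos (sq t n).
Proof.
move=> t0; elim=> [|n IH]; first exact: linf_cst.
by rewrite sqS; apply: vmax_linf => //; apply: G_linf.
Qed.

Lemma sq_step t n j : sq t n j <= sq t n.+1 j.
Proof. by rewrite sqS /vmax le_max lexx. Qed.

Lemma sq_mono t n m j : (n <= m)%N -> sq t n j <= sq t m j.
Proof.
move=> nm; rewrite -(subnKC nm); elim: (m - n)%N => [|k IH]; first by rewrite addn0.
by apply: le_trans IH _; rewrite addnS; apply: sq_step.
Qed.

Lemma sq_le_fix t (f : I -> R) : 0 <= t -> linf_pos f -> (forall j, t <= f j) ->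
  (forall j, G f j <= f j) -> forall n j, sq t n j <= f j.
Proof.
move=> t0 hf htf hGf; elim=> [|n IH] j; first exact: htf.
rewrite sqS /vmax ge_max IH /=.
apply: le_trans (hGf j); apply: G_mono => //; exact: sq_linf.
Qed.

Lemma sq_phi t : 0 <= t -> forall n j, sq t n j <= phi t.
Proof.
move=> t0 n j.
have claim : forall n j, sq t n j <= Num.max t (G (sq t n) j).
  elim=> [|k IH] i; first by rewrite le_max lexx.
  rewrite sqS /vmax ge_max; apply/andP; split.
    apply: le_trans (IH i) _; rewrite ge_max !le_max lexx /=.
    have := @G_mono (sq t k) (sq t k.+1) i (sq_linf t0 k) (sq_linf t0 k.+1)
      (fun j _ => sq_step t k j); move=> h; by rewrite h orbT.
  rewrite le_max; apply/orP; right.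
  rewrite -/(vmax (sq t k) (G (sq t k))) -sqS; apply: G_mono; [exact: sq_linf | exact: sq_linf |].
  by move=> l _; apply: sq_step.
have := Hphi (sq_linf t0 n) (linf_cst I t0) (claim n).
rewrite supnorm_cst // => h; apply: le_trans h.
exact: linf_ub (sq_linf t0 n) j.
Qed.
Local Notation S := (sigma_star G).

Lemma S_E t j : S t j = sup (range (fun n => sq t n j)). Proof. by []. Qed.

Lemma S_hassup t j : 0 <= t -> has_sup (range (fun n => sq t n j)).
Proof.
move=> t0; split; first by exists (sq t 0 j), 0%N.
by exists (phi t) => _ [n _ <-]; apply: sq_phi.
Qed.

Lemma sq_le_S t n j : 0 <= t -> sq t n j <= S t j.
Proof. by move=> t0; rewrite S_E; apply: sup_upper_bound; [exact: S_hassup | exists n]. Qed.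

Lemma S_le t j x : (forall n, sq t n j <= x) -> S t j <= x.
Proof. by move=> h; rewrite S_E; apply: ge_sup; [exists (sq t 0 j), 0%N | move=> _ [n _ <-]]. Qed.

Lemma S_ge t j : 0 <= t -> t <= S t j.
Proof. by move=> t0; exact: (sq_le_S 0 j t0). Qed.

Lemma S_linf t : 0 <= t -> linf_pos (S t).
Proof.
move=> t0; split; first by move=> j; apply: le_trans t0 (S_ge j t0).
by exists (phi t) => j; apply: S_le => n; apply: sq_phi.
Qed.

Lemma S_approx t j e : 0 <= t -> 0 < e -> exists n, S t j - e <= sq t n j.
Proof.
move=> t0 e0; have [_ [n _ <-] h] := sup_adherent e0 (S_hassup j t0).
by exists n; rewrite S_E ltW.
Qed.

Lemma S_fix t : 0 <= t -> S t = vmax (cstv t) (G (S t)).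
Proof.
move=> t0; have hS := S_linf t0.
have GS : forall i, G (S t) i <= S t i.
  move=> i; apply/ler_addgt0Pr => e e0.
  have [n hn] := @G_cont (sq t) (S t) (sq_linf t0) hS (@sq_mono t)
    (fun n j => sq_le_S n j t0) (fun j e e0 => S_approx j t0 e0) i e e0.
  apply: le_trans hn _; rewrite lerD2r.
  apply: le_trans (sq_le_S n.+1 i t0); rewrite sqS /vmax le_max lexx orbT //.
apply/funext => i; apply/le_anti/andP; split.
  apply: S_le; elim=> [|n IH]; first by rewrite /vmax le_max lexx.
  rewrite sqS {1}/vmax ge_max IH /= /vmax le_max; apply/orP; right.
  apply: G_mono => //; first exact: sq_linf.
  by move=> j _; apply: sq_le_S.
by rewrite /vmax ge_max GS andbT; apply: S_ge.
Qed.

Lemma S_min t (f : I -> R) : 0 <= t -> linf_pos f -> f = vmax (cstv t) (G f) ->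
  forall j, S t j <= f j.
Proof.
move=> t0 hf hfix j; apply: S_le => n; apply: sq_le_fix => //.
  by move=> k; rewrite hfix /vmax le_max lexx.
by move=> k; rewrite {2}hfix /vmax le_max lexx orbT.
Qed.
Variable rho : R -> R.
Hypothesis Hrho : is_Kinf rho.
Variable beta : R -> R -> R.
Hypothesis Hbeta : is_KL beta.
Hypothesis HUGAS : forall s, linf_pos s -> forall n : nat,
      supnorm (iter n (Grho rho G) s) <= beta (supnorm s) n%:R.
Variable ginv : I -> I -> R -> R.
Hypothesis Hginv : forall i j, Ii i j -> forall r, 0 <= r ->
        ginv i j (gam i j r) = r /\ gam i j (ginv i j r) = r.
Hypothesis Hginv_eq : pw_equicont (fun ij : I * I => Ii ij.1 ij.2) (fun ij => ginv ij.1 ij.2).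
Variable zeta : R -> R.
Hypothesis Hzeta_K : is_Kinf zeta.
Hypothesis Hzeta : forall i j, Ii i j -> forall s1 s2 : I -> R, linf_pos s1 -> linf_pos s2 ->
       (forall k, s1 k <= s2 k) ->
       ((zeta (s2 j - s1 j))%:E <= mu i (restr (Ii i) s2) - mu i (restr (Ii i) s1))%E.

Lemma Grho_linf s : linf_pos s -> linf_pos (Grho rho G s).
Proof.
move=> hs; have [B [B0 hB]] := linf_bound hs.
have [C hC] := G_bnd B0.
have G0 i : 0 <= G s i by apply: G_ge0.
split.
  by move=> i; rewrite /Grho addr_ge0 //; apply: (K_ge0 (proj1 Hrho)).
exists (C + rho C) => i; rewrite /Grho; apply: lerD; first exact: hC.
by apply: (K_le (proj1 Hrho)) => //; apply: hC.
Qed.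

Lemma Grho_ge s i : linf_pos s -> G s i <= Grho rho G s i.
Proof.
move=> hs; rewrite /Grho lerDl; apply: (K_ge0 (proj1 Hrho)); exact: G_ge0.
Qed.

Fixpoint good (f : I -> R) (n : nat) (i : I) : Prop :=
  match n with
  | 0%N => True
  | n'.+1 => f i = G f i /\ forall j, Ii i j -> good f n' j
  end.

Lemma good_le (f : I -> R) : linf_pos f -> forall n i, good f n i ->
  f i <= iter n (Grho rho G) f i.
Proof.
move=> hf; have hw : forall n, linf_pos (iter n (Grho rho G) f).
  by elim=> [|n IH] //=; apply: Grho_linf.
elim=> [|n IH] i //= [-> hj].
apply: le_trans (Grho_ge i (hw n)).
by apply: G_mono => // j ij; apply: IH; apply: hj.
Qed.

Lemma restr_idem (J : set I) (s : I -> R) : restr J (restr J s) = restr J s.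
Proof. by apply/funext => k; rewrite /restr; case: asboolP. Qed.
Lemma beta_N (R0 e : R) : 0 <= R0 -> 0 < e -> exists N : nat, beta R0 N%:R <= e.
Proof.
move=> R00 e0; case: Hbeta => _ [hK hdec].
move: R00; rewrite le_eqVlt => /orP[/eqP <-|R0p].
  by exists 0%N; have [-> _] := hK 0 (lexx 0); apply: ltW.
have [T [T0 hT]] := (hdec R0 R0p).2 e e0.
have [N hN] := bound_nat T; exists N; apply: hT; exact: ltW.
Qed.

Lemma margin (r ts : R) (f : I -> R) : 0 <= r -> r < ts -> linf_pos f ->
  f = vmax (cstv r) (G f) -> (forall j, f j <= S ts j) ->
  exists dl, 0 < dl /\ forall j, f j + dl <= S ts j.
Proof.
move=> r0 rts hf hfix hfu.
have ts0 : 0 <= ts by apply: le_trans r0 (ltW rts).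
set u := S ts.
have hu : linf_pos u := S_linf ts0.
have ufix := S_fix ts0; rewrite -/u in ufix.
have Gu i : G u i <= u i by rewrite {2}ufix /vmax le_max lexx orbT.
have tsu i : ts <= u i by rewrite ufix /vmax le_max lexx.
have ts20 : 0 < ts / 2 by rewrite divr_gt0 // (le_lt_trans r0 rts).
have [N hN] := beta_N (supnorm_ge0 f) ts20.
have good_small i : good f N i -> f i <= ts / 2.
  move=> gi; apply: le_trans (good_le hf gi) _; apply: le_trans hN.
  have hw : linf_pos (iter N (Grho rho G) f).
    by elim: (N) => [|n IH] //=; apply: Grho_linf.
  by apply: le_trans (HUGAS hf N); apply: linf_ub.
have [B [B0 hB]] := linf_bound hu.
have [Y [Y0 hY]] := gam_bound B0.
have c0 : 0 < ts - r by rewrite subr_gt0.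
have claim : forall n, exists dl, 0 < dl /\ forall i, ~ good f n i -> dl <= u i - f i.
  elim=> [|n [dn [dn0 Hdn]]]; first by exists 1; split => // i /=; case.
  have dn20 : 0 < dn / 2 by rewrite divr_gt0.
  have [eta [eta0 Heta]] := unif_equicont Hginv_eq Y0 dn20.
  exists (Num.min (ts - r) (zeta eta)); split.
    by rewrite lt_min c0 /=; apply: (K_gt0 (proj1 Hzeta_K)).
  move=> i ngi.
  have fiE : f i = Num.max r (G f i) by rewrite {1}hfix.
  have [Gfr|Gfr] := leP (G f i) r.
    have -> : f i = r by rewrite fiE; apply/max_idPl.
    by rewrite ge_min; apply/orP; left; rewrite lerD2r.
  have fiG : f i = G f i by rewrite fiE; apply/max_idPr/ltW.
  have [j ij ngj] : exists2 j, Ii i j & ~ good f n j.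
    apply: contra_notP ngi => hn; split => // j ij.
    by apply: contra_notP hn => ngj; exists j.
  have hdj := Hdn j ngj.
  have fj0 : 0 <= f j by case: hf.
  have uj0 : 0 <= u j by case: hu.
  have fuj := hfu j; rewrite -/u in fuj.
  have hKij := proj1 (HK ij).
  have gfj0 : 0 <= gam i j (f j) := K_ge0 hKij fj0.
  have gfu : gam i j (f j) <= gam i j (u j) := K_le hKij fj0 fuj.
  have guY : gam i j (u j) <= Y := hY i j ij (u j) uj0 (hB j).
  have geta : eta <= gam i j (u j) - gam i j (f j).
    rewrite leNgt; apply/negP => hlt.
    have := Heta (i, j) ij (gam i j (u j)) (gam i j (f j)) (le_trans gfj0 gfu) guY gfj0
      (le_trans gfu guY).
    rewrite /= (Hginv ij uj0).1 (Hginv ij fj0).1 ger0_norm ?subr_ge0 //.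
    move=> /(_ (ltW hlt)); rewrite ger0_norm ?subr_ge0 //; lra.
  have hz := Hzeta ij (gv_linf i hf) (gv_linf i hu) _.
  have hle : forall k, gv i f k <= gv i u k.
    move=> k; rewrite /gv /restr; case: asboolP => // ik.
    by apply: (K_le (proj1 (HK ik))) (hfu k); case: hf.
  move: (hz hle); rewrite !restr_idem /gv !restr_in // -!/(gv i _).
  rewrite -(fineK (gv_fin i hu)) -(fineK (gv_fin i hf)) -EFinB lee_fin -!GE => hz'.
  have : zeta eta <= zeta (gam i j (u j) - gam i j (f j)).
    by apply: (K_le (proj1 Hzeta_K)) => //; apply: ltW.
  rewrite ge_min; move=> hh; apply/orP; right.
  have := Gu i; lra.
have [dN [dN0 HdN]] := claim N.
exists (Num.min (ts / 2) dN); split; first by rewrite lt_min ts20.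
move=> j; have [gj|ngj] := pselect (good f N j).
  have := good_small j gj; have := tsu j; rewrite -lerBrDl ge_min => h1 h2.
  by apply/orP; left; lra.
by rewrite -lerBrDl ge_min; apply/orP; right; apply: HdN.
Qed.
Hypothesis Hsig : forall r0, 0 <= r0 -> forall e, 0 < e -> exists d, 0 < d /\
     forall r, 0 <= r -> `|r - r0| <= d ->
       supnorm (fun i => S r i - S r0 i) <= e.

Lemma S_diff t t' i : 0 <= t -> 0 <= t' ->
  `|S t i - S t' i| <= supnorm (fun i => S t i - S t' i).
Proof.
move=> t0 t'0; apply: (@supnorm_ub R I (fun i => S t i - S t' i) (phi t + phi t')) => k.
have := S_linf t0; have := S_linf t'0 => -[h1 _] [h2 _].
have b1 : S t k <= phi t by apply: S_le => n; apply: sq_phi.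
have b2 : S t' k <= phi t' by apply: S_le => n; apply: sq_phi.
have := h1 k; have := h2 k => ? ?.
rewrite ler_norml; apply/andP; split; lra.
Qed.

Lemma fix_le_S r (f : I -> R) : 0 <= r -> linf_pos f -> f = vmax (cstv r) (G f) ->
  forall j, f j <= S r j.
Proof.
move=> r0 hf hfix.
pose Q := [set t | r <= t /\ forall j, f j <= S t j].
have Qne : Q !=set0.
  exists (Num.max r (supnorm f)); split; first by rewrite le_max lexx.
  move=> j; apply: le_trans (linf_ub hf j) _.
  apply: le_trans (S_ge j _); first by rewrite le_max lexx orbT.
  by rewrite le_max r0.
have Qlb : lbound Q r by move=> t [].
have hinf : has_inf Q by split => //; exists r.
set ts := inf Q.
have rts : r <= ts by apply: lb_le_inf.
have ts0 : 0 <= ts := le_trans r0 rts.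
have tsQ : forall j, f j <= S ts j.
  move=> j; apply/ler_addgt0Pr => e e0.
  have [d [d0 Hd]] := Hsig ts0 e0.
  have [t [rt ft] tlt] := inf_adherent d0 hinf.
  have tst : ts <= t by apply: (ge_inf hinf.2); split.
  have t0 : 0 <= t := le_trans r0 rt.
  have := Hd t t0; rewrite ger0_norm ?subr_ge0 // => /(_ _).
  move=> /(_ ltac:(rewrite -/ts in tlt; lra)) hs.
  have := S_diff j t0 ts0; rewrite ler_norml => /andP[_ h].
  have := ft j; lra.
move: rts; rewrite le_eqVlt => /orP[/eqP rE|rts]; first by rewrite rE; exact: tsQ.
have [dl [dl0 Hdl]] := margin r0 rts hf hfix tsQ.
have [d [d0 Hd]] := Hsig ts0 dl0.
pose t := Num.max r (ts - d).
have t0 : 0 <= t by rewrite le_max r0.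
have tlt : t < ts by rewrite gt_max rts /=; lra.
have tQ : Q t.
  split; first by rewrite le_max lexx.
  move=> j; have := Hd t t0.
  rewrite ler0_norm ?subr_le0 ?(ltW tlt) //.
  move=> /(_ ltac:(rewrite opprB; rewrite lerBlDr -lerBlDl; rewrite le_max; apply/orP; right; lra)) hs.
  have := S_diff j t0 ts0; rewrite ler_norml => /andP[h _].
  have := Hdl j; lra.
have := ge_inf hinf.2 tQ; rewrite -/ts; lra.
Qed.

Lemma main_result r : 0 <= r ->
    exists s : I -> R,
      (linf_pos s /\ s = vmax (cstv r) (G s)) /\
      forall s' : I -> R, linf_pos s' -> s' = vmax (cstv r) (G s') -> s' = s.
Proof.
move=> r0; exists (S r); split; first by split; [exact: S_linf | exact: S_fix].
move=> s' hs' hfix; apply/funext => j; apply/le_anti/andP; split.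
  exact: fix_le_S.
exact: S_min.
Qed.
End Gain.

Unset Implicit Arguments. Set Strict Implicit.

Theorem proposition3p16 (R : realType) (I : countType) (I_nonempty : inhabited I)
  (Ii : I -> set I) (gam : I -> I -> R -> R) (mu : I -> (I -> R) -> \bar R)
  (Hgain : is_gain_operator Ii gam mu)
  (* (i) *)
  (Hmbi : oplus_MBI (gainop Ii gam mu))
  (* (ii) *)
  (Hrho : exists rho : R -> R, is_Kinf rho /\ UGAS (Grho rho (gainop Ii gam mu)))
  (* (iii) *)
  (Hinv : exists ginv : I -> I -> R -> R,
     (forall i j, Ii i j -> forall r, 0 <= r ->
        ginv i j (gam i j r) = r /\ gam i j (ginv i j r) = r) /\
     pw_equicont (fun ij : I * I => Ii ij.1 ij.2) (fun ij => ginv ij.1 ij.2))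
  (* (iv) *)
  (Hzeta : exists zeta : R -> R, is_Kinf zeta /\
     forall i j, Ii i j -> forall s1 s2 : I -> R, linf_pos s1 -> linf_pos s2 ->
       (forall k, s1 k <= s2 k) ->
       ((zeta (s2 j - s1 j))%:E <= mu i (restr (Ii i) s2) - mu i (restr (Ii i) s1))%E)
  (* (v) *)
  (Hsigma : forall r0, 0 <= r0 -> forall e, 0 < e -> exists d, 0 < d /\
     forall r, 0 <= r -> `|r - r0| <= d ->
       supnorm (fun i => sigma_star (gainop Ii gam mu) r i
                         - sigma_star (gainop Ii gam mu) r0 i) <= e) :
  forall r : R, 0 <= r ->
    exists s : I -> R,
      (linf_pos s /\ s = vmax (cstv r) (gainop Ii gam mu s)) /\
      forall s' : I -> R, linf_pos s' -> s' = vmax (cstv r) (gainop Ii gam mu s') -> s' = s.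

Proof.
move: Hgain => [Hfin [HK [Hgeq [[xi [Hxi HM1]] [HM2 [HM3 HM4]]]]]].
have Hfin' : forall i, finite_set (Ii i) by move=> i; case: (Hfin i).
move: Hmbi => [phi [_ Hphi]].
move: Hrho => [rho [Hrho' [beta [Hbeta HUGAS]]]].
move: Hinv => [ginv [Hginv Hginv_eq]].
move: Hzeta => [zeta [Hzeta_K Hzeta']].
move=> r r0.
exact: (main_result Hfin' HK Hgeq Hxi HM1 HM2 HM3 HM4 I_nonempty Hphi Hrho' Hbeta HUGAS
  Hginv Hginv_eq Hzeta_K Hzeta' Hsigma r0).
Qed.
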